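(* Let $k \geq 14$ be an integer. Then $N(k,5) \geq 6k+4$. If, additionally, $k \equiv 5 \pmod{10}$, then $N(k,5) \geq 6k+5$.
   Context: A $k$-power is a word of the form $u^k$ (concatenation of $k$ copies of $u$) with $u$ nonempty. A $5$-antipower is a word $u_1 \cdots u_5$ with $|u_1| = \cdots = |u_5|$ and $u_1,\dots,u_5$ pairwise distinct. $N(k,r)$ is the smallest integer $\ell$ such that every binary word of length $\ell$ contains either a $k$-power or an $r$-antipower as a factor (contiguous subword). *)

(* Defs.v *)
From mathcomp Require Import all_boot.
Set Implicit Arguments. Unset Strict Implicit. Unset Printing Implicit Defensive.

Definition factor (w s : seq bool) : bool := infix w s.

Definition is_kpower (k : nat) (w : seq bool) : Prop :=
  exists u : seq bool, u != [::] /\ w = flatten (nseq k u).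

Definition is_antipower (r : nat) (w : seq bool) : Prop :=
  exists us : seq (seq bool),
    [/\ size us = r, w = flatten us,
        (forall u v, u \in us -> v \in us -> size u = size v) & uniq us].

Definition has_pow_or_antipow (k r : nat) (s : seq bool) : Prop :=
  exists w, factor w s /\ (is_kpower k w \/ is_antipower r w).

(* The defining property of N(k,r): every binary word of length l contains
   a k-power or an r-antipower. N(k,r) is the least l with this property. *)
Definition N_prop (k r l : nat) : Prop :=
  forall s : seq bool, size s = l -> has_pow_or_antipow k r s.

(* "N(k,r) >= m": every l satisfying the defining property is >= m
   (equivalently the least such l, if it exists, is >= m). *)
Definition N_ge (k r m : nat) : Prop := forall l, N_prop k r l -> m <= l.

(* Main.v *)
Require Import Defs.
From mathcomp Require Import all_boot zify.
Set Implicit Arguments. Unset Strict Implicit. Unset Printing Implicit Defensive.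


Definition seg (D : seq nat) n := count (fun d => d < n) D.
Definition fw D n := odd (n + seg D n).

Lemma seg_mono D : {homo seg D : x y / x <= y}.
Proof.
move=> x y hxy; rewrite /seg; elim: D => //= d D IH; apply: leq_add => //.
by case: (ltnP d x) => // h; rewrite (leq_trans h hxy).
Qed.

Lemma seg_S D x : seg D x.+1 = seg D x + count_mem x D.
Proof.
rewrite /seg; elim: D => //= d D ->; rewrite ltnS.
by case: (ltngtP d x) => h /=; lia.
Qed.

Lemma seg_step D x : uniq D -> seg D x.+1 <= (seg D x).+1.
Proof. by move=> hu; rewrite seg_S count_uniq_mem //; case: (x \in D) => /=; lia. Qed.

Lemma fw_S D x : fw D x.+1 = ~~ fw D x (+) odd (count_mem x D).
Proof. rewrite /fw seg_S addSn oddS addnA oddD; by case: (odd (x + seg D x)); case: (odd (count_mem x D)). Qed.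

Lemma defect_in D x : fw D x.+1 = fw D x -> x \in D.
Proof.
move=> h; apply/negPn/negP => /count_memPn c; move: h; rewrite fw_S c /=; by case: (fw D x).
Qed.

Lemma in_defect D x : uniq D -> x \in D -> fw D x.+1 = fw D x.
Proof. by move=> hu hx; rewrite fw_S count_uniq_mem // hx; case: (fw D x). Qed.

Lemma blk D s s' n i : seg D s = seg D (s + n) -> seg D s' = seg D (s' + n) ->
  odd (s + seg D s) = odd (s' + seg D s') -> i <= n -> fw D (s+i) = fw D (s'+i).
Proof.
move=> h1 h2 h3 hi.
have e1 : seg D (s+i) = seg D s.
  by apply/eqP; rewrite eqn_leq; apply/andP; split; [rewrite h1; apply: seg_mono; rewrite leq_add2l | apply: seg_mono; rewrite leq_addr].
have e2 : seg D (s'+i) = seg D s'.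
  by apply/eqP; rewrite eqn_leq; apply/andP; split; [rewrite h2; apply: seg_mono; rewrite leq_add2l | apply: seg_mono; rewrite leq_addr].
move: h3; rewrite /fw e1 e2 !oddD.
by case: (odd s); case: (odd s'); case: (odd i); case: (odd (seg D s)); case: (odd (seg D s')).
Qed.

Definition hgp (S : seq nat) pa pn t t' :=
  let L u := pa (+) (odd u && ~~ pn) (+) odd (nth 0 S u.*2) in
  [&& nth 0 S t.*2 == nth 0 S t.*2.+1, nth 0 S t'.*2 == nth 0 S t'.*2.+1 & L t == L t'].

Definition hg S pa pn :=
  [|| hgp S pa pn 0 1, hgp S pa pn 0 2, hgp S pa pn 0 3, hgp S pa pn 0 4, hgp S pa pn 1 2,
      hgp S pa pn 1 3, hgp S pa pn 1 4, hgp S pa pn 2 3, hgp S pa pn 2 4 | hgp S pa pn 3 4].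

Definition segs D a n :=
  [:: seg D (a + 0*n.+1); seg D (a + 0*n.+1 + n); seg D (a + 1*n.+1); seg D (a + 1*n.+1 + n);
      seg D (a + 2*n.+1); seg D (a + 2*n.+1 + n); seg D (a + 3*n.+1); seg D (a + 3*n.+1 + n);
      seg D (a + 4*n.+1); seg D (a + 4*n.+1 + n)].

Definition has_good D a n := hg (segs D a n) (odd a) (odd n).

Lemma nthsegs D a n t : t < 5 ->
  nth 0 (segs D a n) t.*2 = seg D (a + t*n.+1) /\
  nth 0 (segs D a n) t.*2.+1 = seg D (a + t*n.+1 + n).
Proof. by case: t => [|[|[|[|[|t]]]]]. Qed.

Lemma hgp_ok D a n t t' : t < 5 -> t' < 5 -> hgp (segs D a n) (odd a) (odd n) t t' ->
  forall i, i <= n -> fw D (a + t*n.+1 + i) = fw D (a + t'*n.+1 + i).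
Proof.
move=> ht ht' /and3P[/eqP e1 /eqP e2 /eqP e3] i hi.
case: (nthsegs D a n ht) e1 e3 => -> ->.
case: (nthsegs D a n ht') e2 => -> -> e2 e1 e3.
apply: (blk (n:=n)) => //.
by rewrite !oddD !oddM /= e3.
Qed.

Lemma good_pair D a n : has_good D a n -> exists t t', t < t' < 5 /\
  forall i, i <= n -> fw D (a + t*n.+1 + i) = fw D (a + t'*n.+1 + i).
Proof.
rewrite /has_good /hg.
do 9 (case/orP; [by move=> h; do 2 eexists; split; [|exact: hgp_ok h]|]).
by move=> h; do 2 eexists; split; [|exact: hgp_ok h].
Qed.

Lemma good_pair0 D a : exists t t', t < t' < 5 /\
  forall i, i <= 0 -> fw D (a + t*1 + i) = fw D (a + t'*1 + i).
Proof.
have H : forall t t', t < t' < 5 -> fw D (a + t*1) = fw D (a + t'*1) -> exists t t', t < t' < 5 /\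
  forall i, i <= 0 -> fw D (a + t*1 + i) = fw D (a + t'*1 + i).
  by move=> t t' h e; exists t, t'; split=> // i; rewrite leqn0 => /eqP ->; rewrite !addn0.
move: (H 0 1) (H 0 2) (H 0 3) (H 0 4) (H 1 2) (H 1 3) (H 1 4) (H 2 3) (H 2 4) (H 3 4).
case: (fw D (a + 0*1)); case: (fw D (a + 1*1)); case: (fw D (a + 2*1)); case: (fw D (a + 3*1));
  case: (fw D (a + 4*1)); move=> h01 h02 h03 h04 h12 h13 h14 h23 h24 h34;
  by [apply: h01 | apply: h02 | apply: h03 | apply: h04 | apply: h12 | apply: h13 | apply: h14 | apply: h23 | apply: h24 | apply: h34].
Qed.


Lemma nth_flat (us : seq (seq bool)) m t i : (forall u, u \in us -> size u = m) ->
  t < size us -> i < m -> nth false (flatten us) (t*m + i) = nth false (nth [::] us t) i.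
Proof.
elim: us t => [|u us IH] [|t] //= hsz ht hi.
  by rewrite mul0n add0n nth_cat (hsz u (mem_head _ _)) hi.
have hu := hsz u (mem_head _ _).
rewrite nth_cat hu mulSn -addnA ltnNge leq_addr /= addKn IH //.
by move=> v hv; apply: hsz; rewrite inE hv orbT.
Qed.

Lemma size_flat (us : seq (seq bool)) m : (forall u, u \in us -> size u = m) ->
  size (flatten us) = size us * m.
Proof.
elim: us => [|u us IH] //= hsz.
rewrite size_cat (hsz u (mem_head _ _)) IH ?mulSn //.
by move=> v hv; apply: hsz; rewrite inE hv orbT.
Qed.

Lemma factor_nth (w s : seq bool) : factor w s -> exists a, a + size w <= size s /\
  forall j, j < size w -> nth false w j = nth false s (a + j).
Proof.
move=> /infixP [p [q ->]]; exists (size p); split.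
  by rewrite !size_cat addnA leq_addr.
by move=> j hj; rewrite nth_cat ltnNge leq_addr /= addKn nth_cat hj.
Qed.

Lemma pair_exists D a n : (1 <= n -> has_good D a n) -> exists t t', t < t' < 5 /\
  forall i, i <= n -> fw D (a + t*n.+1 + i) = fw D (a + t'*n.+1 + i).
Proof.
case: n => [|n] h; first exact: good_pair0.
exact: good_pair (h isT).
Qed.

Lemma no_anti D l : (forall a n, a + 5 * n.+1 <= l -> 1 <= n -> has_good D a n) ->
  forall w, factor w (mkseq (fw D) l) -> ~ is_antipower 5 w.
Proof.
move=> HG w hf [us [hs hw hsz hu]].
case: (factor_nth hf) => a []; rewrite size_mkseq => ha hnth.
set m := size (nth [::] us 0).
have hsz' : forall u, u \in us -> size u = m.
  by move=> u hu'; apply: hsz => //; apply: mem_nth; rewrite hs.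
have hw' : size w = 5 * m by rewrite hw (size_flat hsz') hs.
case: m hsz' hw' => [|n] hsz' hw'.
  have e0 : nth [::] us 0 = [::] by apply/size0nil; apply: hsz'; apply: mem_nth; rewrite hs.
  have e1 : nth [::] us 1 = [::] by apply/size0nil; apply: hsz'; apply: mem_nth; rewrite hs.
  by have := @nth_uniq _ [::] us 0 1; rewrite hs e0 e1 eqxx => /(_ isT isT hu).
have [t [t' [htt' hpair]]] : exists t t', t < t' < 5 /\
  forall i, i <= n -> fw D (a + t*n.+1 + i) = fw D (a + t'*n.+1 + i).
  by apply: pair_exists => hn; apply: HG => //; move: ha; rewrite hw'.
have blockE : forall t0 i, t0 < 5 -> i < n.+1 ->
    nth false (nth [::] us t0) i = fw D (a + t0 * n.+1 + i).
  move=> t0 i ht0 hi; rewrite -(nth_flat hsz') ?hs // -hw hnth; last first.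
    by rewrite hw'; move: ht0 hi; clear; nia.
  rewrite nth_mkseq ?addnA //.
  move: ha; rewrite hw'; move: ht0 hi; clear; nia.
have : nth [::] us t = nth [::] us t'.
  apply: (@eq_from_nth _ false).
    rewrite (hsz' _ (mem_nth _ _)) ?(hsz' _ (mem_nth _ _)) ?hs //.
      by move: htt'; clear; lia.
    by move: htt'; clear; lia.
  move=> i; rewrite (hsz' _ (mem_nth _ _)) ?hs; last by move: htt'; clear; lia.
  move=> hi; rewrite !blockE //; try (move: htt'; clear; lia).
  by apply: hpair; move: hi; clear; lia.
move/eqP; rewrite nth_uniq ?hs //; try (move: htt'; clear; lia).
Qed.


Lemma no_pow D L k : 6 <= k -> L < 7 * k ->
  (forall x y, x \in D -> y \in D -> x < y -> 4 <= y - x <= 24 -> False) ->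
  (forall s, s + 2*k <= L -> exists x, s <= x <= s + 2*k - 2 /\ fw D x.+1 = fw D x) ->
  forall l w, l <= L -> factor w (mkseq (fw D) l) -> ~ is_kpower k w.
Proof.
move=> hk hL HP1 HP2 l w hl hf [u [hu hw]].
case: (factor_nth hf) => a []; rewrite size_mkseq => ha hnth.
set p := size u.
have hp : 0 < p by rewrite lt0n size_eq0.
have hszu : forall v, v \in nseq k u -> size v = p by move=> v /nseqP [->].
have hsw : size w = k * p by rewrite hw (size_flat hszu) size_nseq.
have F : forall j, j < k * p -> fw D (a + j) = nth false u (j %% p).
  move=> j hj.
  have hj' : a + j < l by move: ha; rewrite hsw; lia.
  rewrite -(nth_mkseq false (fw D) hj') -hnth; last by rewrite hsw.
  have hd : j %/ p < k by rewrite ltn_divLR.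
  rewrite hw {1}(divn_eq j p) (nth_flat hszu) ?size_nseq ?ltn_pmod //.
  by rewrite nth_nseq hd.
have Fm : forall x y, x < k * p -> y < k * p -> x %% p = y %% p -> fw D (a + x) = fw D (a + y).
  by move=> x y hx hy e; rewrite F // F // e.
have hkpL : a + k * p <= L by move: ha; rewrite hsw; lia.
have hp6 : p <= 6.
  have : k * p < k * 7 by move: hL hkpL; clear; lia.
  by rewrite ltn_mul2l => /andP[_]; lia.
have hkp : 6 * p <= k * p by rewrite leq_mul2r hk orbT.
have defect : forall x, x.+1 < k * p -> fw D (a + x).+1 = fw D (a + x) ->
    forall y, y.+1 < k * p -> x %% p = y %% p -> a + y \in D.
  move=> x hx e y hy hxy; apply: defect_in.
  rewrite -addnS -(Fm x.+1) // -?(Fm x y) //; try lia.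
  + by rewrite addnS.
  + by rewrite -addn1 -(addn1 y) -modnDml hxy modnDml.
case: (ltnP 1 p) => hp1.
- have h2k : k * 2 <= k * p by rewrite leq_mul2l hp1 orbT.
  have hL2 : a + 2*k <= L by move: hkpL h2k; clear; lia.
  have [x [/andP [hx1 hx2] hx]] := HP2 a hL2.
  set j := x - a; set r := j %% p.
  have hr : r < p by rewrite ltn_mod.
  have hj : j.+1 < k * p by rewrite /j; move: h2k hx1 hx2 hk; clear; lia.
  have ex : fw D (a + j).+1 = fw D (a + j) by rewrite /j subnKC.
  have hr1 : r.+1 < k * p by move: hr hkp hp; clear; lia.
  have hr2 : (r + 4*p).+1 < k * p by move: hr hkp hp; clear; lia.
  have d1 := defect j hj ex r hr1 (esym (modn_mod _ _)).
  have e4 : j %% p = (r + 4*p) %% p by rewrite /r addnC modnMDl modn_mod.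
  have d2 := defect j hj ex (r + 4*p) hr2 e4.
  apply: (HP1 (a + r) (a + (r + 4*p))); [apply: d1|apply: d2| |].
  + by move: hp; clear; lia.
  + by move: hp hp6; clear; lia.
- have hp1' : p = 1 by move: hp hp1; clear; lia.
  have h1 : 1 < k * p by rewrite hp1' muln1; move: hk; clear; lia.
  have h5 : 5 < k * p by rewrite hp1' muln1; move: hk; clear; lia.
  have ex : fw D (a + 0).+1 = fw D (a + 0).
    have e10 : 1 %% p = 0 %% p by rewrite hp1'.
    by rewrite -addnS (Fm 1 0 h1 (ltnW h1) e10).
  have d1 := defect 0 h1 ex 0 h1 (erefl _).
  have e4 : 0 %% p = 4 %% p by rewrite hp1' !modn1.
  have d2 := defect 0 h1 ex 4 h5 e4.
  apply: (HP1 (a + 0) (a + 4)); [apply: d1|apply: d2| |] => //.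
  all: by clear; lia.
Qed.


Definition De k := [:: k.+1; 3*k; 3*k+1; 5*k].
Definition Do k := [:: 0; 1; 2; 3; 2*k+2; 2*k+3; 4*k+2; 4*k+3; 6*k+2].

Lemma uniq_De k : 14 <= k -> uniq (De k).
Proof. move=> hk; rewrite /= !inE; lia. Qed.
Lemma uniq_Do k : 14 <= k -> uniq (Do k).
Proof. move=> hk; rewrite /= !inE; lia. Qed.

Lemma seg_cases_e k P : 14 <= k ->
  (seg (De k) P = 0 /\ P <= k.+1) \/ (seg (De k) P = 1 /\ k.+1 < P /\ P <= 3*k) \/
  (seg (De k) P = 2 /\ P = 3*k+1) \/ (seg (De k) P = 3 /\ 3*k+1 < P /\ P <= 5*k) \/
  (seg (De k) P = 4 /\ 5*k < P).
Proof.
move=> hk; rewrite /seg /=.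
case: (ltnP k.+1 P) => h1; case: (ltnP (3*k) P) => h2; try (exfalso; lia);
case: (ltnP (3*k+1) P) => h3; try (exfalso; lia);
case: (ltnP (5*k) P) => h4; try (exfalso; lia); simpl; lia.
Qed.

Lemma seg_cases_o k P : 14 <= k ->
  (seg (Do k) P = 0 /\ P = 0) \/ (seg (Do k) P = 1 /\ P = 1) \/ (seg (Do k) P = 2 /\ P = 2) \/
  (seg (Do k) P = 3 /\ P = 3) \/ (seg (Do k) P = 4 /\ 3 < P /\ P <= 2*k+2) \/
  (seg (Do k) P = 5 /\ P = 2*k+3) \/ (seg (Do k) P = 6 /\ 2*k+3 < P /\ P <= 4*k+2) \/
  (seg (Do k) P = 7 /\ P = 4*k+3) \/ (seg (Do k) P = 8 /\ 4*k+3 < P /\ P <= 6*k+2) \/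
  (seg (Do k) P = 9 /\ 6*k+2 < P).
Proof.
move=> hk; rewrite /seg /=.
case: (ltnP 0 P) => h0; case: (ltnP 1 P) => h1; try (exfalso; lia);
case: (ltnP 2 P) => h2; try (exfalso; lia);
case: (ltnP 3 P) => h3; try (exfalso; lia);
case: (ltnP (2*k+2) P) => h4; try (exfalso; lia);
case: (ltnP (2*k+3) P) => h5; try (exfalso; lia);
case: (ltnP (4*k+2) P) => h6; try (exfalso; lia);
case: (ltnP (4*k+3) P) => h7; try (exfalso; lia);
case: (ltnP (6*k+2) P) => h8; try (exfalso; lia); simpl; lia.
Qed.

Lemma ex_even k a n q : 14 <= k -> k = 2*q -> 1 <= n -> a + 5*n.+1 <= 6*k+3 -> has_good (De k) a n.
Proof.
move=> hk hq hn hL.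
have m1 : seg (De k) (a + 0*n.+1) <= seg (De k) (a + 0*n.+1 + n) by apply: seg_mono; lia.
have m2 : seg (De k) (a + 0*n.+1 + n) <= seg (De k) (a + 1*n.+1) by apply: seg_mono; lia.
have m3 : seg (De k) (a + 1*n.+1) <= seg (De k) (a + 1*n.+1 + n) by apply: seg_mono; lia.
have m4 : seg (De k) (a + 1*n.+1 + n) <= seg (De k) (a + 2*n.+1) by apply: seg_mono; lia.
have m5 : seg (De k) (a + 2*n.+1) <= seg (De k) (a + 2*n.+1 + n) by apply: seg_mono; lia.
have m6 : seg (De k) (a + 2*n.+1 + n) <= seg (De k) (a + 3*n.+1) by apply: seg_mono; lia.
have m7 : seg (De k) (a + 3*n.+1) <= seg (De k) (a + 3*n.+1 + n) by apply: seg_mono; lia.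
have m8 : seg (De k) (a + 3*n.+1 + n) <= seg (De k) (a + 4*n.+1) by apply: seg_mono; lia.
have m9 : seg (De k) (a + 4*n.+1) <= seg (De k) (a + 4*n.+1 + n) by apply: seg_mono; lia.
have u2 : seg (De k) (a + 1*n.+1) <= (seg (De k) (a + 0*n.+1 + n)).+1 by rewrite (_ : (a + 1*n.+1) = (a + 0*n.+1 + n).+1); [apply: seg_step; exact: uniq_De | lia].
have u4 : seg (De k) (a + 2*n.+1) <= (seg (De k) (a + 1*n.+1 + n)).+1 by rewrite (_ : (a + 2*n.+1) = (a + 1*n.+1 + n).+1); [apply: seg_step; exact: uniq_De | lia].
have u6 : seg (De k) (a + 3*n.+1) <= (seg (De k) (a + 2*n.+1 + n)).+1 by rewrite (_ : (a + 3*n.+1) = (a + 2*n.+1 + n).+1); [apply: seg_step; exact: uniq_De | lia].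
have u8 : seg (De k) (a + 4*n.+1) <= (seg (De k) (a + 3*n.+1 + n)).+1 by rewrite (_ : (a + 4*n.+1) = (a + 3*n.+1 + n).+1); [apply: seg_step; exact: uniq_De | lia].
(have c0 := seg_cases_e (a + 0*n.+1) hk; destruct c0 as [[c0 ?]|[[c0 [? ?]]|[[c0 ?]|[[c0 [? ?]]|[c0 ?]]]]]; try (exfalso; clear c0 m1 m2 m3 m4 m5 m6 m7 m8 m9 u2 u4 u6 u8; lia);
  have c1 := seg_cases_e (a + 0*n.+1 + n) hk; destruct c1 as [[c1 ?]|[[c1 [? ?]]|[[c1 ?]|[[c1 [? ?]]|[c1 ?]]]]]; try (exfalso; move: (m1); rewrite c0 c1; by []); try (exfalso; clear c0 c1 m1 m2 m3 m4 m5 m6 m7 m8 m9 u2 u4 u6 u8; lia);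
  have c2 := seg_cases_e (a + 1*n.+1) hk; destruct c2 as [[c2 ?]|[[c2 [? ?]]|[[c2 ?]|[[c2 [? ?]]|[c2 ?]]]]]; try (exfalso; move: (m2); rewrite c1 c2; by []); try (exfalso; move: (u2); rewrite c1 c2; by []); try (exfalso; clear c0 c1 c2 m1 m2 m3 m4 m5 m6 m7 m8 m9 u2 u4 u6 u8; lia);
  have c3 := seg_cases_e (a + 1*n.+1 + n) hk; destruct c3 as [[c3 ?]|[[c3 [? ?]]|[[c3 ?]|[[c3 [? ?]]|[c3 ?]]]]]; try (exfalso; move: (m3); rewrite c2 c3; by []); try (exfalso; clear c0 c1 c2 c3 m1 m2 m3 m4 m5 m6 m7 m8 m9 u2 u4 u6 u8; lia);
  have c4 := seg_cases_e (a + 2*n.+1) hk; destruct c4 as [[c4 ?]|[[c4 [? ?]]|[[c4 ?]|[[c4 [? ?]]|[c4 ?]]]]]; try (exfalso; move: (m4); rewrite c3 c4; by []); try (exfalso; move: (u4); rewrite c3 c4; by []); try (exfalso; clear c0 c1 c2 c3 c4 m1 m2 m3 m4 m5 m6 m7 m8 m9 u2 u4 u6 u8; lia);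
  have c5 := seg_cases_e (a + 2*n.+1 + n) hk; destruct c5 as [[c5 ?]|[[c5 [? ?]]|[[c5 ?]|[[c5 [? ?]]|[c5 ?]]]]]; try (exfalso; move: (m5); rewrite c4 c5; by []); try (exfalso; clear c0 c1 c2 c3 c4 c5 m1 m2 m3 m4 m5 m6 m7 m8 m9 u2 u4 u6 u8; lia);
  have c6 := seg_cases_e (a + 3*n.+1) hk; destruct c6 as [[c6 ?]|[[c6 [? ?]]|[[c6 ?]|[[c6 [? ?]]|[c6 ?]]]]]; try (exfalso; move: (m6); rewrite c5 c6; by []); try (exfalso; move: (u6); rewrite c5 c6; by []); try (exfalso; clear c0 c1 c2 c3 c4 c5 c6 m1 m2 m3 m4 m5 m6 m7 m8 m9 u2 u4 u6 u8; lia);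
  have c7 := seg_cases_e (a + 3*n.+1 + n) hk; destruct c7 as [[c7 ?]|[[c7 [? ?]]|[[c7 ?]|[[c7 [? ?]]|[c7 ?]]]]]; try (exfalso; move: (m7); rewrite c6 c7; by []); try (exfalso; clear c0 c1 c2 c3 c4 c5 c6 c7 m1 m2 m3 m4 m5 m6 m7 m8 m9 u2 u4 u6 u8; lia);
  have c8 := seg_cases_e (a + 4*n.+1) hk; destruct c8 as [[c8 ?]|[[c8 [? ?]]|[[c8 ?]|[[c8 [? ?]]|[c8 ?]]]]]; try (exfalso; move: (m8); rewrite c7 c8; by []); try (exfalso; move: (u8); rewrite c7 c8; by []); try (exfalso; clear c0 c1 c2 c3 c4 c5 c6 c7 c8 m1 m2 m3 m4 m5 m6 m7 m8 m9 u2 u4 u6 u8; lia);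
  have c9 := seg_cases_e (a + 4*n.+1 + n) hk; destruct c9 as [[c9 ?]|[[c9 [? ?]]|[[c9 ?]|[[c9 [? ?]]|[c9 ?]]]]]; try (exfalso; move: (m9); rewrite c8 c9; by []); try (exfalso; clear c0 c1 c2 c3 c4 c5 c6 c7 c8 c9 m1 m2 m3 m4 m5 m6 m7 m8 m9 u2 u4 u6 u8; lia);
  rewrite /has_good /segs c0 c1 c2 c3 c4 c5 c6 c7 c8 c9; case Ha: (odd a); case Hn: (odd n); first [reflexivity | exfalso; have := odd_double_half a; have := odd_double_half n; rewrite Ha Hn -!muln2 => ? ?; clear c0 c1 c2 c3 c4 c5 c6 c7 c8 c9 m1 m2 m3 m4 m5 m6 m7 m8 m9 u2 u4 u6 u8; lia]).
Qed.



Lemma ex_odd3 k a n q : 14 <= k -> k = 2*q+1 -> 1 <= n -> a + 5*n.+1 <= 6*k+3 -> has_good (Do k) a n.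
Proof.
move=> hk hq hn hL.
have m1 : seg (Do k) (a + 0*n.+1) <= seg (Do k) (a + 0*n.+1 + n) by apply: seg_mono; lia.
have m2 : seg (Do k) (a + 0*n.+1 + n) <= seg (Do k) (a + 1*n.+1) by apply: seg_mono; lia.
have m3 : seg (Do k) (a + 1*n.+1) <= seg (Do k) (a + 1*n.+1 + n) by apply: seg_mono; lia.
have m4 : seg (Do k) (a + 1*n.+1 + n) <= seg (Do k) (a + 2*n.+1) by apply: seg_mono; lia.
have m5 : seg (Do k) (a + 2*n.+1) <= seg (Do k) (a + 2*n.+1 + n) by apply: seg_mono; lia.
have m6 : seg (Do k) (a + 2*n.+1 + n) <= seg (Do k) (a + 3*n.+1) by apply: seg_mono; lia.
have m7 : seg (Do k) (a + 3*n.+1) <= seg (Do k) (a + 3*n.+1 + n) by apply: seg_mono; lia.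
have m8 : seg (Do k) (a + 3*n.+1 + n) <= seg (Do k) (a + 4*n.+1) by apply: seg_mono; lia.
have m9 : seg (Do k) (a + 4*n.+1) <= seg (Do k) (a + 4*n.+1 + n) by apply: seg_mono; lia.
have u2 : seg (Do k) (a + 1*n.+1) <= (seg (Do k) (a + 0*n.+1 + n)).+1 by rewrite (_ : (a + 1*n.+1) = (a + 0*n.+1 + n).+1); [apply: seg_step; exact: uniq_Do | lia].
have u4 : seg (Do k) (a + 2*n.+1) <= (seg (Do k) (a + 1*n.+1 + n)).+1 by rewrite (_ : (a + 2*n.+1) = (a + 1*n.+1 + n).+1); [apply: seg_step; exact: uniq_Do | lia].
have u6 : seg (Do k) (a + 3*n.+1) <= (seg (Do k) (a + 2*n.+1 + n)).+1 by rewrite (_ : (a + 3*n.+1) = (a + 2*n.+1 + n).+1); [apply: seg_step; exact: uniq_Do | lia].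
have u8 : seg (Do k) (a + 4*n.+1) <= (seg (Do k) (a + 3*n.+1 + n)).+1 by rewrite (_ : (a + 4*n.+1) = (a + 3*n.+1 + n).+1); [apply: seg_step; exact: uniq_Do | lia].
(have c0 := seg_cases_o (a + 0*n.+1) hk; destruct c0 as [[c0 ?]|[[c0 ?]|[[c0 ?]|[[c0 ?]|[[c0 [? ?]]|[[c0 ?]|[[c0 [? ?]]|[[c0 ?]|[[c0 [? ?]]|[c0 ?]]]]]]]]]]; try (exfalso; clear c0 m1 m2 m3 m4 m5 m6 m7 m8 m9 u2 u4 u6 u8; lia);
  have c1 := seg_cases_o (a + 0*n.+1 + n) hk; destruct c1 as [[c1 ?]|[[c1 ?]|[[c1 ?]|[[c1 ?]|[[c1 [? ?]]|[[c1 ?]|[[c1 [? ?]]|[[c1 ?]|[[c1 [? ?]]|[c1 ?]]]]]]]]]]; try (exfalso; move: (m1); rewrite c0 c1; by []); try (exfalso; clear c0 c1 m1 m2 m3 m4 m5 m6 m7 m8 m9 u2 u4 u6 u8; lia);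
  have c2 := seg_cases_o (a + 1*n.+1) hk; destruct c2 as [[c2 ?]|[[c2 ?]|[[c2 ?]|[[c2 ?]|[[c2 [? ?]]|[[c2 ?]|[[c2 [? ?]]|[[c2 ?]|[[c2 [? ?]]|[c2 ?]]]]]]]]]]; try (exfalso; move: (m2); rewrite c1 c2; by []); try (exfalso; move: (u2); rewrite c1 c2; by []); try (exfalso; clear c0 c1 c2 m1 m2 m3 m4 m5 m6 m7 m8 m9 u2 u4 u6 u8; lia);
  have c3 := seg_cases_o (a + 1*n.+1 + n) hk; destruct c3 as [[c3 ?]|[[c3 ?]|[[c3 ?]|[[c3 ?]|[[c3 [? ?]]|[[c3 ?]|[[c3 [? ?]]|[[c3 ?]|[[c3 [? ?]]|[c3 ?]]]]]]]]]]; try (exfalso; move: (m3); rewrite c2 c3; by []); try (exfalso; clear c0 c1 c2 c3 m1 m2 m3 m4 m5 m6 m7 m8 m9 u2 u4 u6 u8; lia);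
  have c4 := seg_cases_o (a + 2*n.+1) hk; destruct c4 as [[c4 ?]|[[c4 ?]|[[c4 ?]|[[c4 ?]|[[c4 [? ?]]|[[c4 ?]|[[c4 [? ?]]|[[c4 ?]|[[c4 [? ?]]|[c4 ?]]]]]]]]]]; try (exfalso; move: (m4); rewrite c3 c4; by []); try (exfalso; move: (u4); rewrite c3 c4; by []); try (exfalso; clear c0 c1 c2 c3 c4 m1 m2 m3 m4 m5 m6 m7 m8 m9 u2 u4 u6 u8; lia);
  have c5 := seg_cases_o (a + 2*n.+1 + n) hk; destruct c5 as [[c5 ?]|[[c5 ?]|[[c5 ?]|[[c5 ?]|[[c5 [? ?]]|[[c5 ?]|[[c5 [? ?]]|[[c5 ?]|[[c5 [? ?]]|[c5 ?]]]]]]]]]]; try (exfalso; move: (m5); rewrite c4 c5; by []); try (exfalso; clear c0 c1 c2 c3 c4 c5 m1 m2 m3 m4 m5 m6 m7 m8 m9 u2 u4 u6 u8; lia);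
  have c6 := seg_cases_o (a + 3*n.+1) hk; destruct c6 as [[c6 ?]|[[c6 ?]|[[c6 ?]|[[c6 ?]|[[c6 [? ?]]|[[c6 ?]|[[c6 [? ?]]|[[c6 ?]|[[c6 [? ?]]|[c6 ?]]]]]]]]]]; try (exfalso; move: (m6); rewrite c5 c6; by []); try (exfalso; move: (u6); rewrite c5 c6; by []); try (exfalso; clear c0 c1 c2 c3 c4 c5 c6 m1 m2 m3 m4 m5 m6 m7 m8 m9 u2 u4 u6 u8; lia);
  have c7 := seg_cases_o (a + 3*n.+1 + n) hk; destruct c7 as [[c7 ?]|[[c7 ?]|[[c7 ?]|[[c7 ?]|[[c7 [? ?]]|[[c7 ?]|[[c7 [? ?]]|[[c7 ?]|[[c7 [? ?]]|[c7 ?]]]]]]]]]]; try (exfalso; move: (m7); rewrite c6 c7; by []); try (exfalso; clear c0 c1 c2 c3 c4 c5 c6 c7 m1 m2 m3 m4 m5 m6 m7 m8 m9 u2 u4 u6 u8; lia);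
  have c8 := seg_cases_o (a + 4*n.+1) hk; destruct c8 as [[c8 ?]|[[c8 ?]|[[c8 ?]|[[c8 ?]|[[c8 [? ?]]|[[c8 ?]|[[c8 [? ?]]|[[c8 ?]|[[c8 [? ?]]|[c8 ?]]]]]]]]]]; try (exfalso; move: (m8); rewrite c7 c8; by []); try (exfalso; move: (u8); rewrite c7 c8; by []); try (exfalso; clear c0 c1 c2 c3 c4 c5 c6 c7 c8 m1 m2 m3 m4 m5 m6 m7 m8 m9 u2 u4 u6 u8; lia);
  have c9 := seg_cases_o (a + 4*n.+1 + n) hk; destruct c9 as [[c9 ?]|[[c9 ?]|[[c9 ?]|[[c9 ?]|[[c9 [? ?]]|[[c9 ?]|[[c9 [? ?]]|[[c9 ?]|[[c9 [? ?]]|[c9 ?]]]]]]]]]]; try (exfalso; move: (m9); rewrite c8 c9; by []); try (exfalso; clear c0 c1 c2 c3 c4 c5 c6 c7 c8 c9 m1 m2 m3 m4 m5 m6 m7 m8 m9 u2 u4 u6 u8; lia);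
  rewrite /has_good /segs c0 c1 c2 c3 c4 c5 c6 c7 c8 c9; case Ha: (odd a); case Hn: (odd n); first [reflexivity | exfalso; have := odd_double_half a; have := odd_double_half n; rewrite Ha Hn -!muln2 => ? ?; clear c0 c1 c2 c3 c4 c5 c6 c7 c8 c9 m1 m2 m3 m4 m5 m6 m7 m8 m9 u2 u4 u6 u8; lia]).
Qed.



Lemma ex_odd4 k a n q : 14 <= k -> k = 10*q+5 -> 1 <= n -> a + 5*n.+1 = 6*k+4 -> has_good (Do k) a n.
Proof.
move=> hk hq hn hL.
have m1 : seg (Do k) (a + 0*n.+1) <= seg (Do k) (a + 0*n.+1 + n) by apply: seg_mono; lia.
have m2 : seg (Do k) (a + 0*n.+1 + n) <= seg (Do k) (a + 1*n.+1) by apply: seg_mono; lia.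
have m3 : seg (Do k) (a + 1*n.+1) <= seg (Do k) (a + 1*n.+1 + n) by apply: seg_mono; lia.
have m4 : seg (Do k) (a + 1*n.+1 + n) <= seg (Do k) (a + 2*n.+1) by apply: seg_mono; lia.
have m5 : seg (Do k) (a + 2*n.+1) <= seg (Do k) (a + 2*n.+1 + n) by apply: seg_mono; lia.
have m6 : seg (Do k) (a + 2*n.+1 + n) <= seg (Do k) (a + 3*n.+1) by apply: seg_mono; lia.
have m7 : seg (Do k) (a + 3*n.+1) <= seg (Do k) (a + 3*n.+1 + n) by apply: seg_mono; lia.
have m8 : seg (Do k) (a + 3*n.+1 + n) <= seg (Do k) (a + 4*n.+1) by apply: seg_mono; lia.
have m9 : seg (Do k) (a + 4*n.+1) <= seg (Do k) (a + 4*n.+1 + n) by apply: seg_mono; lia.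
have u2 : seg (Do k) (a + 1*n.+1) <= (seg (Do k) (a + 0*n.+1 + n)).+1 by rewrite (_ : (a + 1*n.+1) = (a + 0*n.+1 + n).+1); [apply: seg_step; exact: uniq_Do | lia].
have u4 : seg (Do k) (a + 2*n.+1) <= (seg (Do k) (a + 1*n.+1 + n)).+1 by rewrite (_ : (a + 2*n.+1) = (a + 1*n.+1 + n).+1); [apply: seg_step; exact: uniq_Do | lia].
have u6 : seg (Do k) (a + 3*n.+1) <= (seg (Do k) (a + 2*n.+1 + n)).+1 by rewrite (_ : (a + 3*n.+1) = (a + 2*n.+1 + n).+1); [apply: seg_step; exact: uniq_Do | lia].
have u8 : seg (Do k) (a + 4*n.+1) <= (seg (Do k) (a + 3*n.+1 + n)).+1 by rewrite (_ : (a + 4*n.+1) = (a + 3*n.+1 + n).+1); [apply: seg_step; exact: uniq_Do | lia].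
(have c0 := seg_cases_o (a + 0*n.+1) hk; destruct c0 as [[c0 ?]|[[c0 ?]|[[c0 ?]|[[c0 ?]|[[c0 [? ?]]|[[c0 ?]|[[c0 [? ?]]|[[c0 ?]|[[c0 [? ?]]|[c0 ?]]]]]]]]]]; try (exfalso; clear c0 m1 m2 m3 m4 m5 m6 m7 m8 m9 u2 u4 u6 u8; lia);
  have c1 := seg_cases_o (a + 0*n.+1 + n) hk; destruct c1 as [[c1 ?]|[[c1 ?]|[[c1 ?]|[[c1 ?]|[[c1 [? ?]]|[[c1 ?]|[[c1 [? ?]]|[[c1 ?]|[[c1 [? ?]]|[c1 ?]]]]]]]]]]; try (exfalso; move: (m1); rewrite c0 c1; by []); try (exfalso; clear c0 c1 m1 m2 m3 m4 m5 m6 m7 m8 m9 u2 u4 u6 u8; lia);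
  have c2 := seg_cases_o (a + 1*n.+1) hk; destruct c2 as [[c2 ?]|[[c2 ?]|[[c2 ?]|[[c2 ?]|[[c2 [? ?]]|[[c2 ?]|[[c2 [? ?]]|[[c2 ?]|[[c2 [? ?]]|[c2 ?]]]]]]]]]]; try (exfalso; move: (m2); rewrite c1 c2; by []); try (exfalso; move: (u2); rewrite c1 c2; by []); try (exfalso; clear c0 c1 c2 m1 m2 m3 m4 m5 m6 m7 m8 m9 u2 u4 u6 u8; lia);
  have c3 := seg_cases_o (a + 1*n.+1 + n) hk; destruct c3 as [[c3 ?]|[[c3 ?]|[[c3 ?]|[[c3 ?]|[[c3 [? ?]]|[[c3 ?]|[[c3 [? ?]]|[[c3 ?]|[[c3 [? ?]]|[c3 ?]]]]]]]]]]; try (exfalso; move: (m3); rewrite c2 c3; by []); try (exfalso; clear c0 c1 c2 c3 m1 m2 m3 m4 m5 m6 m7 m8 m9 u2 u4 u6 u8; lia);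
  have c4 := seg_cases_o (a + 2*n.+1) hk; destruct c4 as [[c4 ?]|[[c4 ?]|[[c4 ?]|[[c4 ?]|[[c4 [? ?]]|[[c4 ?]|[[c4 [? ?]]|[[c4 ?]|[[c4 [? ?]]|[c4 ?]]]]]]]]]]; try (exfalso; move: (m4); rewrite c3 c4; by []); try (exfalso; move: (u4); rewrite c3 c4; by []); try (exfalso; clear c0 c1 c2 c3 c4 m1 m2 m3 m4 m5 m6 m7 m8 m9 u2 u4 u6 u8; lia);
  have c5 := seg_cases_o (a + 2*n.+1 + n) hk; destruct c5 as [[c5 ?]|[[c5 ?]|[[c5 ?]|[[c5 ?]|[[c5 [? ?]]|[[c5 ?]|[[c5 [? ?]]|[[c5 ?]|[[c5 [? ?]]|[c5 ?]]]]]]]]]]; try (exfalso; move: (m5); rewrite c4 c5; by []); try (exfalso; clear c0 c1 c2 c3 c4 c5 m1 m2 m3 m4 m5 m6 m7 m8 m9 u2 u4 u6 u8; lia);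
  have c6 := seg_cases_o (a + 3*n.+1) hk; destruct c6 as [[c6 ?]|[[c6 ?]|[[c6 ?]|[[c6 ?]|[[c6 [? ?]]|[[c6 ?]|[[c6 [? ?]]|[[c6 ?]|[[c6 [? ?]]|[c6 ?]]]]]]]]]]; try (exfalso; move: (m6); rewrite c5 c6; by []); try (exfalso; move: (u6); rewrite c5 c6; by []); try (exfalso; clear c0 c1 c2 c3 c4 c5 c6 m1 m2 m3 m4 m5 m6 m7 m8 m9 u2 u4 u6 u8; lia);
  have c7 := seg_cases_o (a + 3*n.+1 + n) hk; destruct c7 as [[c7 ?]|[[c7 ?]|[[c7 ?]|[[c7 ?]|[[c7 [? ?]]|[[c7 ?]|[[c7 [? ?]]|[[c7 ?]|[[c7 [? ?]]|[c7 ?]]]]]]]]]]; try (exfalso; move: (m7); rewrite c6 c7; by []); try (exfalso; clear c0 c1 c2 c3 c4 c5 c6 c7 m1 m2 m3 m4 m5 m6 m7 m8 m9 u2 u4 u6 u8; lia);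
  have c8 := seg_cases_o (a + 4*n.+1) hk; destruct c8 as [[c8 ?]|[[c8 ?]|[[c8 ?]|[[c8 ?]|[[c8 [? ?]]|[[c8 ?]|[[c8 [? ?]]|[[c8 ?]|[[c8 [? ?]]|[c8 ?]]]]]]]]]]; try (exfalso; move: (m8); rewrite c7 c8; by []); try (exfalso; move: (u8); rewrite c7 c8; by []); try (exfalso; clear c0 c1 c2 c3 c4 c5 c6 c7 c8 m1 m2 m3 m4 m5 m6 m7 m8 m9 u2 u4 u6 u8; lia);
  have c9 := seg_cases_o (a + 4*n.+1 + n) hk; destruct c9 as [[c9 ?]|[[c9 ?]|[[c9 ?]|[[c9 ?]|[[c9 [? ?]]|[[c9 ?]|[[c9 [? ?]]|[[c9 ?]|[[c9 [? ?]]|[c9 ?]]]]]]]]]]; try (exfalso; move: (m9); rewrite c8 c9; by []); try (exfalso; clear c0 c1 c2 c3 c4 c5 c6 c7 c8 c9 m1 m2 m3 m4 m5 m6 m7 m8 m9 u2 u4 u6 u8; lia);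
  rewrite /has_good /segs c0 c1 c2 c3 c4 c5 c6 c7 c8 c9; case Ha: (odd a); case Hn: (odd n); first [reflexivity | exfalso; have := odd_double_half a; have := odd_double_half n; rewrite Ha Hn -!muln2 => ? ?; clear c0 c1 c2 c3 c4 c5 c6 c7 c8 c9 m1 m2 m3 m4 m5 m6 m7 m8 m9 u2 u4 u6 u8; lia]).
Qed.




Lemma HP1_e k : 14 <= k -> forall x y, x \in De k -> y \in De k -> x < y -> 4 <= y - x <= 24 -> False.
Proof. move=> hk x y; rewrite !inE => hx hy hxy hd; lia. Qed.

Lemma HP1_o k : 14 <= k -> forall x y, x \in Do k -> y \in Do k -> x < y -> 4 <= y - x <= 24 -> False.
Proof. move=> hk x y; rewrite !inE => hx hy hxy hd; lia. Qed.

Lemma HP2_e k : 14 <= k -> forall s, s + 2*k <= 6*k+3 ->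
  exists x, s <= x <= s + 2*k - 2 /\ fw (De k) x.+1 = fw (De k) x.
Proof.
move=> hk s hs.
have H : forall x, x \in De k -> s <= x <= s + 2*k - 2 -> exists x, s <= x <= s + 2*k - 2 /\ fw (De k) x.+1 = fw (De k) x.
  by move=> x hx hr; exists x; split => //; apply: in_defect => //; exact: uniq_De.
case: (leqP s k.+1) => h1; first by apply: (H k.+1); rewrite ?inE; lia.
case: (leqP s (3*k)) => h2; first by apply: (H (3*k)); rewrite ?inE; lia.
case: (leqP s (3*k+1)) => h3; first by apply: (H (3*k+1)); rewrite ?inE; lia.
by apply: (H (5*k)); rewrite ?inE; lia.
Qed.

Lemma HP2_o k : 14 <= k -> forall s, s + 2*k <= 6*k+4 ->
  exists x, s <= x <= s + 2*k - 2 /\ fw (Do k) x.+1 = fw (Do k) x.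
Proof.
move=> hk s hs.
have H : forall x, x \in Do k -> s <= x <= s + 2*k - 2 -> exists x, s <= x <= s + 2*k - 2 /\ fw (Do k) x.+1 = fw (Do k) x.
  by move=> x hx hr; exists x; split => //; apply: in_defect => //; exact: uniq_Do.
case: (leqP s 3) => h1; first by apply: (H 3); rewrite ?inE; lia.
case: (leqP s (2*k+2)) => h2; first by apply: (H (2*k+2)); rewrite ?inE; lia.
case: (leqP s (2*k+3)) => h3; first by apply: (H (2*k+3)); rewrite ?inE; lia.
case: (leqP s (4*k+2)) => h4; first by apply: (H (4*k+2)); rewrite ?inE; lia.
case: (leqP s (4*k+3)) => h5; first by apply: (H (4*k+3)); rewrite ?inE; lia.
by apply: (H (6*k+2)); rewrite ?inE; lia.
Qed.

Lemma word_ok D k L l : 6 <= k -> L < 7 * k -> l <= L ->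
  (forall x y, x \in D -> y \in D -> x < y -> 4 <= y - x <= 24 -> False) ->
  (forall s, s + 2*k <= L -> exists x, s <= x <= s + 2*k - 2 /\ fw D x.+1 = fw D x) ->
  (forall a n, a + 5 * n.+1 <= l -> 1 <= n -> has_good D a n) ->
  ~ has_pow_or_antipow k 5 (mkseq (fw D) l).
Proof.
move=> hk hL hl HP1 HP2 HG [w [hf [hp|ha]]].
  exact: (no_pow hk hL HP1 HP2 hl hf hp).
exact: (no_anti HG hf ha).
Qed.

Lemma even_ok k l : 14 <= k -> ~~ odd k -> l <= 6*k+3 ->
  ~ has_pow_or_antipow k 5 (mkseq (fw (De k)) l).
Proof.
move=> hk hodd hl.
have hq : k = 2 * k./2 by have := odd_double_half k; rewrite (negbTE hodd) -muln2; lia.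
apply: (word_ok (L := 6*k+3)) => //; try lia.
- exact: HP1_e.
- exact: HP2_e.
- move=> a n ha hn; apply: (ex_even (q := k./2)) => //; lia.
Qed.

Lemma odd_ok k l : 14 <= k -> odd k -> (l <= 6*k+3 \/ (l = 6*k+4 /\ k %% 10 = 5)) ->
  ~ has_pow_or_antipow k 5 (mkseq (fw (Do k)) l).
Proof.
move=> hk hodd hl.
have hq : k = 2 * k./2 + 1 by have := odd_double_half k; rewrite hodd -muln2; lia.
apply: (word_ok (L := 6*k+4)) => //; try lia.
- exact: HP1_o.
- exact: HP2_o.
- move=> a n ha hn.
  case: (leqP (a + 5 * n.+1) (6*k+3)) => h.
    by apply: (ex_odd3 (q := k./2)) => //; lia.
  have [hl4 h5] : l = 6*k+4 /\ k %% 10 = 5 by case: hl => //; lia.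
  have hq5 : k = 10 * (k %/ 10) + 5 by have := divn_eq k 10; rewrite h5; lia.
  by apply: (ex_odd4 (q := k %/ 10)) => //; lia.
Qed.

Unset Implicit Arguments.
Theorem theorem15 (k : nat) (hk : 14 <= k) :
  N_ge k 5 (6 * k + 4) /\ (k %% 10 = 5 -> N_ge k 5 (6 * k + 5)).
Proof.
split.
- move=> l hN; rewrite leqNgt; apply/negP => hl.
  case: (boolP (odd k)) => hodd.
  + apply: (odd_ok hk hodd (_ : l <= 6*k+3 \/ _)); first by left; lia.
    by apply: hN; rewrite size_mkseq.
  + apply: (even_ok hk hodd (_ : l <= 6*k+3)); first by lia.
    by apply: hN; rewrite size_mkseq.
- move=> h5 l hN; rewrite leqNgt; apply/negP => hl.
  have hodd : odd k.
    by rewrite (divn_eq k 10) h5 oddD oddM andbF.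
  apply: (odd_ok hk hodd (_ : l <= 6*k+3 \/ (l = 6*k+4 /\ k %% 10 = 5))).
    by case: (leqP l (6*k+3)) => h; [left | right; split => //; lia].
  by apply: hN; rewrite size_mkseq.
Qed.
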